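(* Let $n$ be an odd positive integer and $(\lambda\mid\mu)$ a bipartition of $n$. Then \[\Gamma^B_{(\lambda\mid\mu)}=\begin{cases}2\,\Gamma^D_{(\lambda\mid\mu)} & \ell(\mu)\text{ even},\\ 0 & \ell(\mu)\text{ odd}.\end{cases}\] Consequently $s_n^B=2s_n^D$.
   Context: $B_n$ is the group of permutations $w$ of $\{\pm1,\dots,\pm n\}$ with $w(-i)=-w(i)$, and $D_n=\{w\in B_n:w(1)\cdots w(n)>0\}$. Each $w\in B_n$ decomposes uniquely into positive cycles $(a_1,\dots,a_\ell)(-a_1,\dots,-a_\ell)$ and negative cycles $(b_1,\dots,b_\ell,-b_1,\dots,-b_\ell)$; its cycle type is the bipartition $(\lambda\mid\mu)$ of positive and negative cycle lengths, and conjugacy classes of $B_n$ are indexed by bipartitions of $n$. An element lies in $D_n$ iff $\ell(\mu)$ (the number of parts of $\mu$) is even; for $n$ odd, the $B_n$-class of each such $(\lambda\mid\mu)$ is a single $D_n$-conjugacy class. $\Gamma^B_{(\lambda\mid\mu)}$ (resp. $\Gamma^D_{(\lambda\mid\mu)}$) is the sum of the column of the complex character table of $B_n$ (resp. $D_n$) at the class of cycle type $(\lambda\mid\mu)$; $s_n^B$, $s_n^D$ are the sums of all entries of the character tables of $B_n$, $D_n$. *)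

(* Defs.v *)
From HB Require Import structures.
From mathcomp Require Import all_boot all_order all_algebra all_fingroup all_solvable all_field all_character.
Set Implicit Arguments. Unset Strict Implicit. Unset Printing Implicit Defensive.


(* The signed set {+-1,...,+-n} is encoded as bool * 'I_n :
   (false, i) stands for  +(i+1)  and  (true, i) stands for  -(i+1). *)
Notation sT n := (bool * 'I_n)%type.

Definition negT n (x : sT n) : sT n := (~~ x.1, x.2).

Definition Bset n : {set {perm sT n}} :=
  [set w : {perm sT n} | [forall x, w (negT x) == negT (w x)]].

Lemma group_set_B n : group_set (Bset n).
Proof.
apply/group_setP; split.
  by rewrite inE; apply/forallP => x; rewrite !perm1.
move=> x y; rewrite !inE => /forallP Hx /forallP Hy; apply/forallP => z.
by rewrite !permM (eqP (Hx z)) (eqP (Hy _)).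
Qed.

Definition Bn n : {group {perm sT n}} := Group (group_set_B n).

(* the sign of w(1)...w(n) : true iff an odd number of the w(i) are negative *)
Definition sgnB n (w : {perm sT n}) : bool :=
  \big[addb/false]_(i < n) (w (false, i)).1.

Lemma sgnB1 n : sgnB (1%g : {perm sT n}) = false.
Proof. by rewrite /sgnB big1 // => i _; rewrite perm1. Qed.

Lemma sgnBM n (w v : {perm sT n}) : w \in Bset n -> v \in Bset n ->
  sgnB (w * v)%g = sgnB w (+) sgnB v.
Proof.
rewrite !inE => /forallP Hw /forallP Hv.
have E i : ((w * v)%g (false, i)).1 =
           (w (false, i)).1 (+) (v (false, (w (false, i)).2)).1.
  rewrite permM; case: (w (false, i)) => [[] j] //=.
  by have := eqP (Hv (false, j)); rewrite /negT /= => ->.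
rewrite /sgnB (eq_bigr _ (fun i _ => E i)) big_split /=; congr addb.
have inj : injective (fun i : 'I_n => (w (false, i)).2).
  move=> i j /= eij.
  have [e1|n1] := eqVneq (w (false, i)).1 (w (false, j)).1.
    have : w (false, i) = w (false, j).
      by move: e1 eij; case: (w (false, i)) => a b; case: (w (false, j)) => c d /= -> ->.
    by move/perm_inj => [].
  have : w (false, i) = w (true, j).
    have -> : (true, j) = negT (false, j) by [].
    rewrite (eqP (Hw _)); move: n1 eij; rewrite /negT.
    by case: (w (false, i)) => a b; case: (w (false, j)) => c d /= + ->; case: a; case: c.
  by move/perm_inj.
by rewrite [RHS](reindex_inj inj).
Qed.

Definition Dset n : {set {perm sT n}} := [set w in Bset n | ~~ sgnB w].

Lemma group_set_D n : group_set (Dset n).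
Proof.
apply/group_setP; split.
  by rewrite inE (group1 (Bn n)) sgnB1.
move=> x y /setIdP [Bx sx] /setIdP [By sy]; apply/setIdP; split.
  exact: (@groupM _ (Bn n) x y Bx By).
by rewrite sgnBM // (negbTE sx) (negbTE sy).
Qed.

Definition Dn n : {group {perm sT n}} := Group (group_set_D n).

(* An orbit X with -X = X is a negative cycle (b_1..b_l,-b_1..-b_l)
   of length #|X|/2; otherwise X and -X form one positive cycle of length #|X|.
   Of the pair {X, -X} we keep the orbit containing the positive letter of
   smallest absolute value occurring in X (exactly one of X, -X does). *)
Definition negclosed n (X : {set sT n}) : bool := (@negT n) @: X == X.

Definition chosen_rep n (X : {set sT n}) : bool :=
  [exists x in X, (x.1 == false) && [forall y in X, (x.2 <= y.2)%N]].

Definition posCycles n (w : {perm sT n}) : seq nat :=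
  sort geq [seq #|X| | X : {set sT n} <- enum (porbits w) & ~~ negclosed X && chosen_rep X].

Definition negCycles n (w : {perm sT n}) : seq nat :=
  sort geq [seq (#|X| %/ 2)%N | X : {set sT n} <- enum (porbits w) & negclosed X].

Definition is_partition (l : seq nat) : bool := sorted geq l && all (fun k => 0 < k)%N l.

Definition is_bipartition n (lam mu : seq nat) : bool :=
  [&& is_partition lam, is_partition mu & sumn lam + sumn mu == n].

Definition typeClass n (lam mu : seq nat) : {set {perm sT n}} :=
  [set w in Bn n | (posCycles w == lam) && (negCycles w == mu)].

Local Open Scope ring_scope.

Definition colSum (gT : finGroupType) (G : {group gT}) (x : gT) : algC :=
  \sum_(i : Iirr G) 'chi[G]_i x.

Definition tableSum (gT : finGroupType) (G : {group gT}) : algC :=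
  \sum_(xG in classes G) colSum G (repr xG).

(* Gamma^B_(lam|mu), and Gamma^D_(lam|mu) (for n odd the B_n-class is a single
   D_n-class, evaluated at a representative of it) *)
Definition GammaB n (lam mu : seq nat) : algC := colSum (Bn n) (repr (typeClass n lam mu)).
Definition GammaD n (lam mu : seq nat) : algC := colSum (Dn n) (repr (typeClass n lam mu)).

(* Main.v *)
Require Import Defs.
From mathcomp Require Import all_boot all_order all_algebra all_fingroup all_solvable all_field all_character.
From mathcomp Require Import zify.
Set Implicit Arguments. Unset Strict Implicit. Unset Printing Implicit Defensive.


Definition start (L : seq nat) b := sumn (take b L).
Fixpoint blk (L : seq nat) (i : nat) : nat :=
  if L is k :: L' then (if i < k then 0 else (blk L' (i - k)).+1) else 0.

Lemma start0 L : start L 0 = 0.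
Proof. by case: L. Qed.
Lemma startS k L b : start (k :: L) b.+1 = k + start L b.
Proof. by []. Qed.

Lemma blk_spec L i : i < sumn L ->
  blk L i < size L /\ start L (blk L i) <= i < start L (blk L i) + nth 0 L (blk L i).
Proof.
elim: L i => [|k L IH] i //= lt.
case: (ltnP i k) => ik; first by rewrite start0.
have [h1 h2] := IH (i - k) ltac:(lia).
rewrite startS; split; first lia.
rewrite /=; move: h2; lia.
Qed.

Lemma blk_uniq L b r : b < size L -> r < nth 0 L b -> blk L (start L b + r) = b.
Proof.
elim: L b => [|k L IH] [|b] //= bs rb.
  by rewrite start0 add0n rb.
rewrite startS ifN; last lia.
by rewrite -addnA addKn IH.
Qed.

Lemma startSn L b : b < size L -> start L b.+1 = start L b + nth 0 L b.
Proof. by move=> bs; rewrite /start (take_nth 0 bs) sumn_rcons. Qed.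

Lemma start_le L b : start L b <= sumn L.
Proof. by rewrite /start -{2}(cat_take_drop b L) sumn_cat leq_addr. Qed.

Lemma start_len L b : b < size L -> start L b + nth 0 L b <= sumn L.
Proof. by move=> bs; rewrite -startSn // start_le. Qed.

Section Nxt.
Variables (L : seq nat) (m : nat).

Definition nxt i := let b := blk L i in
  if i.+1 < start L b + nth 0 L b then i.+1 else start L b.
Definition flp i := let b := blk L i in
  (start L b + nth 0 L b <= i.+1) && (m <= b).

Lemma nxt_in b r : b < size L -> r < nth 0 L b ->
  nxt (start L b + r) = (if r.+1 < nth 0 L b then start L b + r.+1 else start L b)
  /\ flp (start L b + r) = (nth 0 L b <= r.+1) && (m <= b).
Proof.
move=> bs rb; rewrite /nxt /flp blk_uniq //.
split; first by case: ifP => h; case: ifP => h'; lia.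
congr andb; lia.
Qed.

Lemma blk_dec i : i < sumn L -> exists b r, [/\ b < size L, r < nth 0 L b & i = start L b + r].
Proof.
move=> lt; have [h1 h2] := blk_spec lt.
exists (blk L i), (i - start L (blk L i)); split => //; lia.
Qed.

Lemma nxt_lt i : i < sumn L -> nxt i < sumn L.
Proof.
move=> /blk_dec [b [r [bs rb ->]]]; have [-> _] := nxt_in bs rb.
have := start_len bs; case: ifP; lia.
Qed.

Lemma blk_nxt i : i < sumn L -> blk L (nxt i) = blk L i.
Proof.
move=> /blk_dec [b [r [bs rb ->]]]; have [-> _] := nxt_in bs rb.
rewrite blk_uniq //; case: ifP => h.
  by rewrite blk_uniq.
by rewrite -(addn0 (start L b)) blk_uniq //; lia.
Qed.

Lemma nxt_inj i j : i < sumn L -> j < sumn L -> nxt i = nxt j -> i = j.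
Proof.
move=> il jl E.
have := blk_nxt il; rewrite E blk_nxt // => ebj.
move: il jl E ebj => /blk_dec [b [r [bs rb ->]]] /blk_dec [b' [r' [bs' rb' ->]]].
rewrite !blk_uniq // => E ebb; subst b'.
have [e1 _] := nxt_in bs rb; have [e2 _] := nxt_in bs' rb'.
move: E; rewrite e1 e2.
case: ifP; case: ifP; lia.
Qed.

End Nxt.

Import GroupScope GRing.Theory Num.Theory.


Lemma negTK n : involutive (@negT n).
Proof. by case=> e i; rewrite /negT /= negbK. Qed.

Lemma negT_inj n : injective (@negT n).
Proof. exact: inv_inj (@negTK n). Qed.

Definition zB n : {perm sT n} := perm (@negT_inj n).

Lemma zBE n x : zB n x = negT x.
Proof. by rewrite permE. Qed.

Lemma inBP n (w : {perm sT n}) : reflect (forall x, w (negT x) = negT (w x)) (w \in Bn n).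
Proof.
rewrite /= inE; apply: (iffP forallP) => H x; first exact/eqP. exact/eqP.
Qed.

Lemma zB_in n : zB n \in Bn n.
Proof. by apply/inBP => x; rewrite !zBE. Qed.

Lemma zB_comm n (w : {perm sT n}) : w \in Bn n -> commute w (zB n).
Proof.
move/inBP=> H; apply/permP => x; by rewrite !permM !zBE H.
Qed.

Lemma addb_const n : \big[addb/false]_(i < n) true = odd n.
Proof.
rewrite big_const_ord; elim: n => //= n ->.
Qed.

Lemma sgnB_z n : sgnB (zB n) = odd n.
Proof.
rewrite /sgnB (eq_bigr (fun _ => true)) ?addb_const // => i _; by rewrite zBE.
Qed.

Lemma zB2 n : zB n * zB n = 1.
Proof. by apply/permP => x; rewrite permM !zBE negTK perm1. Qed.

Lemma DsubB n : Dn n \subset Bn n.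
Proof. by apply/subsetP => w; rewrite /= inE => /andP[]. Qed.

Lemma inDE n (w : {perm sT n}) : (w \in Dn n) = (w \in Bn n) && ~~ sgnB w.
Proof. by rewrite /= inE. Qed.

Section Odd.
Variable n : nat.
Hypothesis n_odd : odd n.

Let n_gt0 : (0 < n)%N.
Proof. by case: n n_odd. Qed.

Let i0 : 'I_n := Ordinal n_gt0.

Lemma zB_neq1 : zB n != 1.
Proof.
apply/eqP => /permP /(_ (false, i0)); rewrite zBE perm1 /negT /=.
by case.
Qed.

Lemma cycle_z y : y \in <[zB n]> -> y = 1 \/ y = zB n.
Proof.
case/cycleP => k ->; rewrite -(expg_mod k (_ : zB n ^+ 2 = 1)); last first.
  by rewrite expgS expg1 zB2.
have : (k %% 2 < 2)%N by rewrite ltn_mod.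
case: (k %% 2)%N => [|[|//]] _; [left | right]; by rewrite ?expg0 ?expg1.
Qed.

Definition Zg := <[zB n]>%G.

Lemma card_Z : #|Zg| = 2%N.
Proof.
rewrite /= -orderE.
have d : (#[zB n] %| 2)%N by rewrite order_dvdn expgS expg1 zB2.
have := dvdn_leq (isT : (0 < 2)%N) d; have := order_gt0 (zB n).
have := zB_neq1; rewrite -order_eq1.
case: #[zB n] => [|[|[|]]] //.
Qed.

Lemma z_notD : zB n \notin Dn n.
Proof. by rewrite inDE sgnB_z n_odd andbF. Qed.

Lemma DZ_dprod : Dn n \x Zg = Bn n.
Proof.
have cZD : Zg \subset 'C(Dn n).
  rewrite centsC /Zg /= cent_cycle; apply/subsetP => w wD.
  apply/cent1P; apply: zB_comm; exact: (subsetP (DsubB n)).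
have tI : Dn n :&: Zg = 1.
  apply/trivgP; apply/subsetP => y /setIP[yD /cycle_z [->|yz]].
    by rewrite inE.
  by move: yD; rewrite yz (negbTE z_notD).
rewrite dprodE //; apply/eqP; rewrite eqEsubset mulG_subG DsubB /=.
have -> : <[zB n]> \subset Bset n by rewrite (cycle_subG (zB n) (Bn n)) zB_in.
apply/subsetP => w wB.
case sw: (sgnB w).
  have -> : w = (w * zB n) * zB n by rewrite -mulgA zB2 mulg1.
  apply: mem_mulg; last exact: cycle_id.
  by rewrite inDE groupM ?zB_in //= sgnBM ?sgnB_z ?sw ?n_odd //; apply: zB_in.
rewrite -(mulg1 w); apply: mem_mulg; last exact: group1.
by rewrite inDE wB sw.
Qed.

Local Open Scope ring_scope.

Lemma colSum_abelian (gT : finGroupType) (G : {group gT}) x :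
  abelian G -> colSum G x = #|G|%:R *+ (x == 1%g).
Proof.
move=> aG; rewrite -cfRegE cfReg_sum sum_cfunE /colSum; apply: eq_bigr => i _.
have /char_abelianP/(_ i) := aG; move/lin_char1 => ->.
by rewrite cfunE mul1r.
Qed.

Lemma colSum_dprod d y : d \in Dn n -> y \in Zg ->
  colSum (Bn n) (d * y) = colSum (Dn n) d * colSum Zg y.
Proof.
move=> dD yZ; rewrite /colSum.
rewrite (reindex (dprod_Iirr DZ_dprod)) /=; last first.
  exists (inv_dprod_Iirr DZ_dprod) => k _; [exact: (dprod_IirrK DZ_dprod k) | exact: (inv_dprod_IirrK DZ_dprod k)].
transitivity (\sum_(p : Iirr (Dn n) * Iirr Zg) 'chi_p.1 d * 'chi_p.2 y).
  by apply: eq_bigr => -[i j] _ /=; rewrite (dprod_IirrE DZ_dprod) (cfDprodE DZ_dprod).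
rewrite -(pair_bigA _ (fun i j => 'chi[Dn n]_i d * 'chi[Zg]_j y)) mulr_suml; apply: eq_bigr => i _; by rewrite mulr_sumr.
Qed.

Lemma colSumB x : x \in Bn n ->
  colSum (Bn n) x = if x \in Dn n then 2 * colSum (Dn n) x else 0.
Proof.
move=> xB.
have aZ : abelian Zg by apply: cycle_abelian.
case: ifP => xD.
  rewrite -{1}[x]mulg1 colSum_dprod ?group1 // (@colSum_abelian _ Zg 1%g aZ) eqxx card_Z.
  by rewrite mulrC.
have xzD : (x * zB n)%g \in Dn n.
  rewrite inDE groupM ?zB_in //= sgnBM ?zB_in // sgnB_z n_odd.
  by move: xD; rewrite inDE xB /= => /negbFE ->.
have -> : x = ((x * zB n) * zB n)%g by rewrite -mulgA zB2 mulg1.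
rewrite colSum_dprod ?cycle_id // (@colSum_abelian _ Zg _ aZ) (negbTE zB_neq1).
by rewrite mulr0n mulr0.
Qed.

End Odd.

Section Odd2.
Variable n : nat.
Hypothesis n_odd : odd n.

Lemma classB x : x \in Dn n -> x ^: Bn n = x ^: Dn n.
Proof.
move=> xD; apply/setP => y; apply/imsetP/imsetP => [[b bB ->]|[d dD ->]]; last first.
  by exists d => //; apply: (subsetP (DsubB n)).
move: bB; rewrite -(dprodW (DZ_dprod n_odd)) => /mulsgP[d z' dD zZ ->].
exists d => //; rewrite conjgM.
have xdD : x ^ d \in Dn n by rewrite groupJ.
case: (cycle_z zZ) => ->; first by rewrite conjg1.
rewrite conjgE.
have := zB_comm (subsetP (DsubB n) _ xdD) => ->.
by rewrite mulKg.
Qed.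

Local Open Scope ring_scope.

Lemma tableSumB : tableSum (Bn n) = 2 * tableSum (Dn n).
Proof.
rewrite /tableSum.
rewrite (eq_bigr (fun C => if repr C \in Dn n then 2 * colSum (Dn n) (repr C) else 0)); last first.
  by move=> C /repr_classesP[rB _]; rewrite colSumB.
rewrite -big_mkcondr mulr_sumr; apply: eq_bigl => C.
apply/andP/repr_classesP => [[/repr_classesP[rB defC] rD]|[rD defC]].
  by split=> //; rewrite -classB.
split=> //; apply/repr_classesP; split; first exact: (subsetP (DsubB n)).
by rewrite classB.
Qed.

End Odd2.

Section Lift.
Variable n : nat.

Definition Lfun (p : {perm 'I_n}) (x : sT n) : sT n := (x.1, p x.2).
Lemma Lfun_inj p : injective (Lfun p).
Proof. by move=> [e i] [e' i'] [-> /perm_inj ->]. Qed.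
Definition Lf (p : {perm 'I_n}) : {perm sT n} := perm (@Lfun_inj p).
Lemma LfE p x : Lf p x = (x.1, p x.2).
Proof. by rewrite permE. Qed.

Lemma LfM p q : Lf (p * q) = Lf p * Lf q.
Proof. by apply/permP => x; rewrite permM !LfE permM. Qed.
Lemma Lf1 : Lf 1 = 1.
Proof. by apply/permP => -[e i]; rewrite LfE !perm1. Qed.

Lemma tperm_pair (e e' : bool) (a b i : 'I_n) :
  tperm (e, a) (e, b) (e', i) = if e == e' then (e', tperm a b i) else (e', i).
Proof.
case: (eqVneq e e') => [<-|ne].
  case: (tpermP a b i) => [->|->|ia ib]; rewrite ?tpermL ?tpermR //.
  by rewrite tpermD // xpair_eqE negb_and; apply/orP; right; apply/eqP => E; [apply: ia | apply: ib].
by rewrite tpermD // xpair_eqE negb_and ne.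
Qed.

Lemma Lf_tperm a b : Lf (tperm a b) = tperm (false, a) (false, b) * tperm (true, a) (true, b).
Proof.
apply/permP => -[e i]; rewrite permM LfE /= !tperm_pair.
by case: e => //=; rewrite tperm_pair /=; case: (eqVneq i a) => [->|_];
  rewrite ?tpermL //; case: (eqVneq i b) => [->|?]; rewrite ?tpermR ?tpermD // eq_sym.
Qed.

Lemma odd_Lf p : odd_perm (Lf p) = false.
Proof.
have [ts -> _] := prod_tpermP p.
rewrite (big_morph Lf LfM Lf1) (big_morph (@odd_perm _) (@odd_permM _) (@odd_perm1 _)).
rewrite big1 // => t _; rewrite Lf_tperm odd_permM !odd_tperm !xpair_eqE /=.
by rewrite addbb.
Qed.

Lemma prod_flip (c : 'I_n -> bool) (r : seq 'I_n) e i : uniq r ->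
  (\prod_(j <- r) (if c j then tperm (false, j) (true, j) else 1)) (e, i)
  = (e (+) (c i && (i \in r)), i).
Proof.
elim: r e => [|j r IH] e /=; first by rewrite big_nil perm1 andbF addbF.
case/andP => jr ur; rewrite big_cons permM inE.
case: (eqVneq i j) => [eij|nij] /=.
  subst i; rewrite andbT.
  by case: (c j) => /=; case: e; rewrite ?tpermL ?tpermR ?perm1 IH // (negbTE jr) andbF.
have -> : (if c j then tperm (false, j) (true, j) else 1) (e, i) = (e, i).
  by case: (c j); rewrite ?perm1 // tpermD // xpair_eqE negb_and [j == i]eq_sym nij orbT.
by rewrite IH.
Qed.

Lemma odd_flip (c : 'I_n -> bool) :
  odd_perm (\prod_(j < n) (if c j then tperm (false, j) (true, j) else 1))
  = \big[addb/false]_(j < n) c j.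
Proof.
rewrite (big_morph (@odd_perm _) (@odd_permM _) (@odd_perm1 _)); apply: eq_bigr => j _.
by case: (c j); rewrite ?odd_perm1 // odd_tperm xpair_eqE.
Qed.

Lemma odd_perm_B (w : {perm sT n}) : w \in Bn n -> odd_perm w = sgnB w.
Proof.
move=> wB; have H := wB; move/inBP: H => Hw.
pose sg i := (w (false, i)).2.
have inj : injective sg.
  move=> i j /= eij.
  have [e1|n1] := eqVneq (w (false, i)).1 (w (false, j)).1.
    have : w (false, i) = w (false, j).
      by move: e1 eij; rewrite /sg; case: (w (false, i)) => a b; case: (w (false, j)) => c d /= -> ->.
    by move/perm_inj => [].
  have : w (false, i) = w (true, j).
    have -> : (true, j) = negT (false, j) by [].
    rewrite Hw; move: n1 eij; rewrite /negT /sg.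
    by case: (w (false, i)) => a b; case: (w (false, j)) => c d /= + ->; case: a; case: c.
  by move/perm_inj.
pose sp := perm inj.
pose c j := (w (false, sp^-1 j)).1.
have E : w = Lf sp * \prod_(j < n) (if c j then tperm (false, j) (true, j) else 1).
  apply/permP => -[e i]; rewrite permM LfE /= prod_flip ?index_enum_uniq //.
  rewrite mem_index_enum andbT /c permK permE /sg.
  case: e; last by case: (w (false, i)).
  have -> : (true, i) = negT (false, i) by [].
  by rewrite Hw; case: (w (false, i)).
rewrite {1}E odd_permM odd_Lf odd_flip /= /sgnB.
rewrite (reindex_inj (perm_inj (s := sp))) /=; apply: eq_bigr => i _.
by rewrite /c permK.
Qed.

End Lift.

Lemma inv_even (T : finType) (f : T -> T) (A : {set T}) :
  (forall x, x \in A -> [/\ f x \in A, f (f x) = x & f x != x]) -> ~~ odd #|A|.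
Proof.
have [k] := ubnP #|A|; elim: k A => // k IH A /ltnSE leA H.
case: (set_0Vmem A) => [->|[x xA]]; first by rewrite cards0.
have [fxA ffx fxx] := H x xA.
have fxA' : f x \in A :\ x by rewrite !inE fxx.
rewrite (cardsD1 x) xA (cardsD1 (f x)) fxA' /= add0n negbK.
apply: IH.
  move: leA; rewrite (cardsD1 x) xA (cardsD1 (f x)) fxA'; lia.
move=> y; rewrite !inE => /and3P[yfx yx yA].
have [fyA ffy fyy] := H y yA; split => //.
rewrite fyA andbT; apply/andP; split.
  by apply: contra yx => /eqP E; rewrite -ffy E ffx.
by apply: contra yfx => /eqP E; rewrite -ffy E.
Qed.

Section Orb.
Variable n : nat.

Lemma expB (w : {perm sT n}) k x : w \in Bn n -> (w ^+ k) (negT x) = negT ((w ^+ k) x).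
Proof. by move=> wB; have /inBP := groupX k wB; apply. Qed.

Lemma negT_porbit (w : {perm sT n}) x : w \in Bn n ->
  (@negT n) @: porbit w x = porbit w (negT x).
Proof.
move=> wB; apply/setP => y; apply/imsetP/porbitP => [[z /porbitP[k ->] ->]|[k ->]].
  by exists k; rewrite expB.
by exists ((w ^+ k) x); [exact: mem_porbit | rewrite expB].
Qed.

Lemma negTTs (X : {set sT n}) : (@negT n) @: ((@negT n) @: X) = X.
Proof.
by rewrite -imset_comp (eq_imset _ (@negTK n)) imset_id.
Qed.

Lemma card_filter_enum (T : finType) (A : {set T}) (P : pred T) :
  count P (enum A) = #|[set x in A | P x]|.
Proof.
rewrite -size_filter -(card_uniqP _); last by rewrite filter_uniq ?enum_uniq.
by apply: eq_card => x; rewrite mem_filter mem_enum !inE andbC.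
Qed.

Lemma odd_perm_negCycles (w : {perm sT n}) : w \in Bn n ->
  odd_perm w = odd (size (negCycles w)).
Proof.
move=> wB; rewrite /odd_perm /negCycles size_sort size_map size_filter.
rewrite card_filter_enum card_prod card_bool card_ord mul2n odd_double /=.
rewrite -(cardsID [set X | negclosed X] (porbits w)) oddD.
have -> : odd #|porbits w :\: [set X | negclosed X]| = false.
  apply/negbTE; apply: (@inv_even _ (fun X : {set sT n} => (@negT n) @: X)) => X.
  rewrite !inE => /andP[ncX /imsetP[x _ eX]]; subst X; split.
  - rewrite negT_porbit // imset_f // andbT; move: ncX.
    by rewrite /negclosed !negT_porbit // negTK eq_sym.
  - by rewrite negTTs.
  - exact: ncX.
rewrite addbF; congr odd; apply: eq_card => X; by rewrite !inE andbC.
Qed.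

Lemma sgnB_negCycles (w : {perm sT n}) : w \in Bn n ->
  sgnB w = odd (size (negCycles w)).
Proof. by move=> wB; rewrite -odd_perm_B // odd_perm_negCycles. Qed.

End Orb.

Lemma filter_none (T : eqType) (a : pred T) s : (forall x, x \in s -> ~~ a x) -> filter a s = [::].
Proof.
elim: s => //= x s IH H; rewrite (negbTE (H x (mem_head _ _))) IH // => y ys.
by apply: H; rewrite inE ys orbT.
Qed.

Lemma filter_all (T : eqType) (a : pred T) s : (forall x, x \in s -> a x) -> filter a s = s.
Proof.
elim: s => //= x s IH H; rewrite (H x (mem_head _ _)) IH // => y ys.
by apply: H; rewrite inE ys orbT.
Qed.

Section Cons.
Variables (n : nat) (lam mu : seq nat).
Hypothesis bip : is_bipartition n lam mu.

Let L := lam ++ mu.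
Let m := size lam.
Let N := size L.

Lemma sumL : sumn L = n.
Proof. by case/and3P: bip => _ _ /eqP; rewrite /L sumn_cat. Qed.

Lemma posL b : (b < N)%N -> (0 < nth 0 L b)%N.
Proof.
case/and3P: bip => /andP[_ pl] /andP[_ pm] _.
have : all (fun k => 0 < k)%N L by rewrite all_cat pl pm.
by move/(all_nthP 0); apply.
Qed.

Lemma mN : (m <= N)%N.
Proof. by rewrite /N /L size_cat leq_addr. Qed.

Lemma lt_n (i : 'I_n) : (i < sumn L)%N.
Proof. by rewrite sumL. Qed.

Definition nxtI (i : 'I_n) : 'I_n := insubd i (nxt L i).

Lemma nxtIE i : val (nxtI i) = nxt L i.
Proof. by rewrite val_insubd (_ : (nxt L i < n)%N) // -[X in (_ < X)%N]sumL nxt_lt // lt_n. Qed.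

Definition wf (x : sT n) : sT n := (x.1 (+) flp L m x.2, nxtI x.2).

Lemma wf_inj : injective wf.
Proof.
move=> [e i] [e' i'] [E1 E2].
have ei : i = i' by apply: val_inj; apply: (nxt_inj m (lt_n i) (lt_n i')); rewrite -!nxtIE E2.
subst i'; congr pair; exact: addIb E1.
Qed.

Definition wc : {perm sT n} := perm wf_inj.

Lemma wcE x : wc x = (x.1 (+) flp L m x.2, nxtI x.2).
Proof. by rewrite permE. Qed.

Lemma wc_B : wc \in Bn n.
Proof. by apply/inBP => -[e i]; rewrite !wcE /negT /= addNb. Qed.

Lemma step b r x : (b < N)%N -> (r < nth 0 L b)%N -> val x.2 = (start L b + r)%N ->
  (wc x).1 = x.1 (+) ((nth 0 L b <= r.+1)%N && (m <= b)%N) /\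
  val (wc x).2 = if (r.+1 < nth 0 L b)%N then (start L b + r.+1)%N else start L b.
Proof.
move=> bN rb xv; have [e1 e2] := nxt_in m bN rb.
by rewrite wcE /= nxtIE xv e1 -e2.
Qed.

Lemma iter_lt b x j : (b < N)%N -> val x.2 = start L b -> (j < nth 0 L b)%N ->
  ((wc ^+ j) x).1 = x.1 /\ val ((wc ^+ j) x).2 = (start L b + j)%N.
Proof.
move=> bN xv; elim: j => [|j IH] jl; first by rewrite expg0 perm1 addn0.
have [h1 h2] := IH (ltnW jl).
rewrite expgSr permM; have [s1 s2] := step bN (ltnW jl) h2.
rewrite s1 s2 h1 jl; split => //.
have E : (nth 0 L b <= j.+1)%N = false by lia.
by rewrite E addbF.
Qed.

Lemma iter_full b x : (b < N)%N -> val x.2 = start L b ->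
  ((wc ^+ nth 0 L b) x).1 = x.1 (+) (m <= b)%N /\ val ((wc ^+ nth 0 L b) x).2 = start L b.
Proof.
move=> bN xv; have := posL bN; case E: (nth 0 L b) => [|k] // _.
have kl : (k < nth 0 L b)%N by rewrite E.
have [h1 h2] := iter_lt bN xv kl.
rewrite expgSr permM; have [s1 s2] := step bN kl h2.
rewrite s1 s2 h1 E ltnn leqnn; done.
Qed.

Definition O (e : bool) b : {set sT n} :=
  [set y : sT n | (blk L (val y.2) == b) && ((m <= b)%N || (y.1 == e))].

Lemma blk_start b : (b < N)%N -> blk L (start L b) = b.
Proof. by move=> bN; rewrite -[start L b]addn0 blk_uniq // posL. Qed.

Lemma porbit_O b x : (b < N)%N -> val x.2 = start L b -> porbit wc x = O x.1 b.
Proof.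
move=> bN xv; apply/setP => y; apply/porbitP/idP => [[k ->]|].
  elim: k => [|k IH]; first by rewrite expg0 perm1 inE xv blk_start // !eqxx orbT.
  move: IH; rewrite expgSr permM !inE => /andP[/eqP bb H].
  rewrite wcE /= nxtIE (blk_nxt m) ?lt_n // bb eqxx /=.
  case mb: (m <= b)%N H => //= /eqP ->.
  by rewrite /flp bb mb andbF addbF.
rewrite inE => /andP[/eqP bb H].
have [_ /andP[ha hb]] := blk_spec (lt_n y.2); rewrite bb in ha hb.
set r := (val y.2 - start L b)%N.
have ha' : (start L b <= val y.2)%N by exact: ha.
have hb' : (val y.2 < start L b + nth 0 L b)%N by exact: hb.
have rl : (r < nth 0 L b)%N by rewrite /r; lia.
have yv : val y.2 = (start L b + r)%N by rewrite /r; lia.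
clearbody r.
case: (eqVneq y.1 x.1) => [e|ne].
  exists r; have [h1 h2] := iter_lt bN xv rl.
  move: h1 h2; case: ((wc ^+ r) x) => e2 i2 /= h1 h2.
  case: y e yv {H bb ha hb ha' hb'} => e' i /= e yv.
  congr pair; [by rewrite e h1 | apply: val_inj; rewrite /= yv -h2 //].
move: H; rewrite (negbTE ne) orbF => mb.
exists (nth 0 L b + r)%N; rewrite expgD permM.
have [f1 f2] := iter_full bN xv.
have [h1 h2] := iter_lt bN f2 rl.
move: h1 h2; rewrite f1 mb; case: ((wc ^+ r) _) => e2 i2 /= h1 h2.
case: y ne yv {bb ha hb ha' hb'} => e' i /= ne yv.
congr pair; last by apply: val_inj; rewrite /= yv -h2.
by move: ne; rewrite h1 addbT; case: e'; case: (x.1).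
Qed.


Lemma start_lt b : (b < N)%N -> (start L b < n)%N.
Proof. move=> bN; have := start_len bN; have := posL bN; rewrite sumL; lia. Qed.

Lemma exists_ib b : (b < N)%N -> exists i : 'I_n, val i = start L b.
Proof. by move=> bN; exists (Ordinal (start_lt bN)). Qed.

Definition Iset b : {set 'I_n} := [set i : 'I_n | blk L i == b].

Lemma card_Iset b : (b < N)%N -> #|Iset b| = nth 0 L b.
Proof.
move=> bN; pose i0 := Ordinal (start_lt bN).
pose f (j : 'I_(nth 0 L b)) : 'I_n := insubd i0 (start L b + j).
have fv j : val (f j) = (start L b + j)%N.
  rewrite val_insubd; have := start_len bN; rewrite sumL => h.
  by rewrite ifT //; have := ltn_ord j; lia.
have -> : Iset b = f @: setT.
  apply/setP => i; rewrite inE; apply/eqP/imsetP => [bi|[j _ ->]]; last by rewrite fv blk_uniq.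
  have [_ /andP[ha hb]] := blk_spec (lt_n i); rewrite bi in ha hb.
  have ha' : (start L b <= val i)%N by exact: ha.
  have hb' : (val i < start L b + nth 0 L b)%N by exact: hb.
  have jl : (val i - start L b < nth 0 L b)%N by lia.
  exists (Ordinal jl); first by rewrite inE.
  apply: val_inj; rewrite fv /=; lia.
rewrite card_imset ?cardsT ?card_ord //.
by move=> j j' E; apply: val_inj; move: (congr1 val E); rewrite !fv => /addnI.
Qed.

Lemma O_neg e b : (m <= b)%N -> O e b = setX setT (Iset b).
Proof. by move=> mb; apply/setP => -[e' i]; rewrite !inE mb /= andbT. Qed.

Lemma O_pos e b : ~~ (m <= b)%N -> O e b = (pair e) @: Iset b.
Proof.
move=> mb; apply/setP => -[e' i]; rewrite inE (negbTE mb) /=.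
apply/andP/imsetP => [[bi /eqP /= ->]|[j ji [-> ->]]].
  by exists i => //; rewrite inE.
by move: ji; rewrite inE => /eqP ->.
Qed.

Lemma card_O e b : (b < N)%N -> #|O e b| = if (m <= b)%N then (2 * nth 0 L b)%N else nth 0 L b.
Proof.
move=> bN; case: ifP => mb.
  by rewrite O_neg // cardsX cardsT card_bool card_Iset.
rewrite O_pos ?mb // card_imset ?card_Iset //.
by move=> i j [].
Qed.

Lemma negT_set (X : {set sT n}) : (forall y, (negT y \in X) = (y \in X)) -> (@negT n) @: X = X.
Proof.
move=> H; apply/setP => y; apply/imsetP/idP => [[z zin ->]|yin]; first by rewrite H.
by exists (negT y); rewrite ?negTK // H.
Qed.

Lemma negclosed_O e b : (b < N)%N -> negclosed (O e b) = (m <= b)%N.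
Proof.
move=> bN; rewrite /negclosed; case mb: (m <= b)%N.
  apply/eqP; apply: negT_set => -[e' i]; by rewrite !inE /negT /= mb.
apply/negbTE/negP => /eqP E.
have [i iv] := exists_ib bN.
have : negT (e, i) \in O e b by rewrite -E imset_f // inE iv blk_start // eqxx eqxx orbT.
by rewrite inE mb /negT /=; case: e {E}; rewrite andbF.
Qed.

Lemma chosen_O e b : (b < N)%N -> ~~ (m <= b)%N -> chosen_rep (O e b) = ~~ e.
Proof.
move=> bN mb; rewrite /chosen_rep; case: e => /=.
  apply/negbTE/existsP => -[x /andP[xin /andP[/eqP x1 _]]].
  by move: xin; rewrite inE (negbTE mb) x1 /= andbF.
have [i iv] := exists_ib bN.
apply/existsP; exists (false, i); rewrite !inE iv blk_start // !eqxx orbT /=.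
apply/forallP => y; apply/implyP; rewrite inE => /andP[/eqP bb _].
have [_ /andP[ha _]] := blk_spec (lt_n y.2); move: ha; rewrite bb -iv; exact: id.
Qed.

Definition Ilist := [seq (true, b) | b <- iota 0 m] ++ [seq (false, b) | b <- iota 0 N].
Definition OO (p : bool * nat) := O p.1 p.2.

Lemma injp (e : bool) : injective (pair e : nat -> bool * nat).
Proof. by move=> x y []. Qed.

Lemma Ilist_mem p : (p \in Ilist) = (p.2 < N)%N && (p.1 ==> (p.2 < m)%N).
Proof.
have mN' := mN.
case: p => [e b]; rewrite mem_cat; case: e => /=.
  have -> : ((true, b) \in [seq (false, b) | b <- iota 0 N]) = false.
    by apply/negbTE/mapP => -[? _ []].
  rewrite (mem_map (@injp true)) mem_iota add0n orbF.
  by case: (ltnP b m) => bm /=; [rewrite andbT; lia | rewrite andbF].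
have -> : ((false, b) \in [seq (true, b) | b <- iota 0 m]) = false.
  by apply/negbTE/mapP => -[? _ []].
by rewrite (mem_map (@injp false)) mem_iota add0n andbT.
Qed.

Lemma uniq_Ilist : uniq Ilist.
Proof.
rewrite cat_uniq (map_inj_uniq (@injp true)) (map_inj_uniq (@injp false)) !iota_uniq /=.
rewrite andbT; apply/hasPn => -[e b] /mapP[b' _ [-> _]].
by apply/mapP => -[b'' _ []].
Qed.

Lemma uniq_Olist : uniq (map OO Ilist).
Proof.
rewrite map_inj_in_uniq ?uniq_Ilist // => -[e b] [e' b']; rewrite !Ilist_mem /OO /=.
move=> /andP[bN im] /andP[bN' im'] E.
have [i iv] := exists_ib bN.
have : (e, i) \in O e' b' by rewrite -E inE iv blk_start // !eqxx orbT.
rewrite inE iv blk_start // => /andP[/eqP bb]; subst b'.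
case: (eqVneq e e') => [ee|ne]; first by rewrite ee.
rewrite orbF => mb.
by move: im im' ne; clear E; case: e; case: e' => //=; rewrite ltnNge mb.
Qed.

Lemma porbits_Olist : perm_eq (enum (porbits wc)) (map OO Ilist).
Proof.
apply: uniq_perm; rewrite ?enum_uniq ?uniq_Olist // => X.
rewrite mem_enum; apply/imsetP/mapP => [[x _ ->]|[p pin ->]].
  have [b Eb] : {b | blk L (val x.2) = b} by exists (blk L (val x.2)).
  have [bN _] := blk_spec (lt_n x.2); rewrite Eb in bN.
  have [i iv] := exists_ib bN.
  have -> : porbit wc x = O x.1 b.
    have E := porbit_O (x := (x.1, i)) bN iv; rewrite /= in E; rewrite -E; apply/eqP.
    by rewrite eq_porbit_mem E inE Eb !eqxx ?orbT.
  case mb: (x.1 && (m <= b)%N).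
    exists (false, b); first by rewrite Ilist_mem /= bN.
    move/andP: mb => [_ mb].
    by apply/setP => y; rewrite /OO !inE /= mb.
  exists (x.1, b); last by [].
  rewrite Ilist_mem /= bN /=; move: mb; case: (x.1) => //=; rewrite ltnNge => ->.
  by [].
move: pin; rewrite Ilist_mem => /andP[bN _].
have [i iv] := exists_ib bN.
by exists (p.1, i) => //; rewrite (porbit_O (x := (p.1, i)) bN iv).
Qed.

Lemma geq_total : total geq.
Proof. by move=> a b; exact: leq_total. Qed.
Lemma geq_trans : transitive geq.
Proof. by move=> y x z /= h1 h2; exact: leq_trans h2 h1. Qed.
Lemma geq_anti : antisymmetric geq.
Proof. by move=> a b /andP[h1 h2]; apply/anti_leq/andP; split; [exact: h2 | exact: h1]. Qed.

Lemma sort_perm_sorted (s l : seq nat) : perm_eq s l -> sorted geq l -> sort geq s = l.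
Proof.
move=> pe sl; rewrite (perm_sortP geq_total geq_trans geq_anti _ _ pe).
exact: (sorted_sort geq_trans sl).
Qed.

Lemma iota_split : iota 0 N = iota 0 m ++ iota m (N - m).
Proof. by rewrite -{1}(subnKC mN) iotaD add0n. Qed.

Lemma posCycles_wc : posCycles wc = lam.
Proof.
rewrite /posCycles; apply: sort_perm_sorted; last by case/and3P: bip => /andP[].
apply: perm_trans (perm_map _ (perm_filter _ porbits_Olist)) _.
rewrite filter_map -map_comp.
rewrite (@eq_in_filter _ _ (fun p : bool * nat => ~~ p.1 && (p.2 < m)%N)); last first.
  move=> [e b]; rewrite Ilist_mem /= => /andP[bN _]; rewrite /preim /OO /= negclosed_O //.
  case: (ltnP b m) => bm /=; last by rewrite andbF.
  by rewrite andbT chosen_O // -ltnNge.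
rewrite filter_cat !filter_map filter_none; last by move=> ? _.
rewrite iota_split filter_cat filter_all; last by move=> b; rewrite mem_iota /preim /=.
rewrite filter_none; last by move=> b; rewrite mem_iota /preim /= -leqNgt => /andP[].
rewrite cats0 /= -map_comp.
have -> : [seq (((fun X : {set sT n} => #|X|) \o OO) \o pair false) b | b <- iota 0 m] = lam.
  rewrite -[RHS](mkseq_nth 0 lam) /mkseq; apply/eq_in_map => b; rewrite mem_iota add0n => /andP[_ bm].
  have bN : (b < N)%N by have := mN; lia.
  by rewrite /= /OO /= card_O // leqNgt bm /= /L nth_cat bm.
exact: perm_refl.
Qed.

Lemma negCycles_wc : negCycles wc = mu.
Proof.
rewrite /negCycles; apply: sort_perm_sorted; last by case/and3P: bip => _ /andP[].
apply: perm_trans (perm_map _ (perm_filter _ porbits_Olist)) _.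
rewrite filter_map -map_comp.
rewrite (@eq_in_filter _ _ (fun p : bool * nat => (m <= p.2)%N)); last first.
  by move=> [e b]; rewrite Ilist_mem /= => /andP[bN _]; rewrite /preim /OO /= negclosed_O.
rewrite filter_cat !filter_map filter_none; last first.
  by move=> b; rewrite mem_iota /preim /= -ltnNge add0n.
rewrite iota_split filter_cat filter_none; last first.
  by move=> b; rewrite mem_iota /preim /= -ltnNge add0n.
rewrite filter_all; last by move=> b; rewrite mem_iota /preim /= => /andP[].
rewrite /= -map_comp.
have -> : (N - m)%N = size mu by rewrite /N /L size_cat addKn.
have -> : [seq ((fun X : {set sT n} => (#|X| %/ 2)%N) \o OO \o pair false) b | b <- iota m (size mu)] = mu.
  rewrite -[RHS](mkseq_nth 0 mu) /mkseq -{1}(addn0 m) iotaDl -map_comp.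
  apply/eq_in_map => b; rewrite mem_iota add0n => /andP[_ bm].
  have bN : (m + b < N)%N by rewrite /N /L size_cat ltn_add2l.
  rewrite /= /OO /= card_O // leq_addr mulKn // /L nth_cat.
  by rewrite ltnNge leq_addr /= addKn.
exact: perm_refl.
Qed.

Lemma wc_type : wc \in typeClass n lam mu.
Proof. by rewrite inE wc_B posCycles_wc negCycles_wc !eqxx. Qed.


End Cons.

Local Open Scope ring_scope.

Theorem proposition5p12 (n : nat) (n_odd : odd n) :
  (forall lam mu : seq nat, is_bipartition n lam mu ->
     GammaB n lam mu = (if odd (size mu) then 0 else 2 * GammaD n lam mu))
  /\ tableSum (Bn n) = 2 * tableSum (Dn n).
Proof.
split; last exact: tableSumB.
move=> lam mu bip; rewrite /GammaB /GammaD.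
have := mem_repr _ (wc_type bip); rewrite inE => /andP[xB /andP[_ /eqP negx]].
rewrite colSumB // inDE xB /= sgnB_negCycles // negx.
by case: (odd (size mu)).
Qed.
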